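(* Let $m,n\in\mathbb N$. Then for all Banach spaces $X,Y$ and all bounded linear operators $T:X\to Y$, $$\tau(T|\mathcal H(\mathbb D_{m+1}^{m+n}))\le\tau(T|\mathcal H(\mathbb D_1^n)).$$
   Context: Dyadic intervals: $\Delta_k^{(j)}:=[\frac{j-1}{2^k},\frac{j}{2^k})$. Haar functions: for $k\ge1$, integer $j$, $\chi_k^{(j)}(t)=+2^{(k-1)/2}$ on $\Delta_k^{(2j-1)}$, $-2^{(k-1)/2}$ on $\Delta_k^{(2j)}$, $0$ otherwise, $t\in[0,1)$. $\mathbb D_m^n:=\{(k,j):k=m,\dots,n;\ j=1,\dots,2^{k-1}\}$. For a finite set $\mathbb F$ of such indices and bounded linear $T:X\to Y$, $\tau(T|\mathcal H(\mathbb F))$ is the least $c\ge0$ such that $\|\sum_{(k,j)\in\mathbb F}Tx_k^{(j)}\chi_k^{(j)}|L_2\|\le c(\sum_{(k,j)\in\mathbb F}\|x_k^{(j)}\|^2)^{1/2}$ for all $x_k^{(j)}\in X$, where $\|\cdot|L_2\|$ is the Bochner $L_2([0,1),Y)$ norm. *)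

(* Defs.v *)
From HB Require Import structures.
From mathcomp Require Import all_boot all_order all_algebra.
From mathcomp Require Import all_classical all_reals all_analysis.
Set Implicit Arguments. Unset Strict Implicit. Unset Printing Implicit Defensive.
Import Order.TTheory GRing.Theory Num.Theory.
Import numFieldNormedType.Exports.
Local Open Scope classical_set_scope.
Local Open Scope ring_scope.

Definition dyadic (R : realType) (k j : nat) : set R :=
  [set t : R | ((j.-1)%:R / 2 ^+ k <= t) && (t < j%:R / 2 ^+ k)].

Definition haar (R : realType) (k j : nat) (t : R) : R :=
  if (0 <= t) && (t < 1) then
    if `[< @dyadic R k (2 * j).-1 t >] then Num.sqrt (2 ^+ k.-1)
    else if `[< @dyadic R k (2 * j) t >] then - Num.sqrt (2 ^+ k.-1)
    else 0
  else 0.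

Definition Dset (m n : nat) : seq (nat * nat) :=
  flatten [seq [seq (k, j) | j <- iota 1 (2 ^ k.-1)] | k <- iota m (n.+1 - m)].

Definition L2norm (R : realType) (Y : normedModType R) (f : R -> Y) : R :=
  Num.sqrt (fine (\int[@lebesgue_measure R]_(t in `[0%R, 1%R[)
                    ((`|f t| ^+ 2)%:E))%E).

Definition tau (R : realType) (X Y : normedModType R) (T : X -> Y)
  (F : seq (nat * nat)) : R :=
  inf [set c : R | 0 <= c /\
    forall x : nat * nat -> X,
      L2norm (fun t => \sum_(p <- F) @haar R p.1 p.2 t *: T (x p))
        <= c * Num.sqrt (\sum_(p <- F) `|x p| ^+ 2)].

(* Main.v *)
Require Import Defs.
From HB Require Import structures.
From mathcomp Require Import all_boot all_order all_algebra.
From mathcomp Require Import all_classical all_reals all_analysis.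
From mathcomp Require Import lra ring zify.
Import Order.TTheory GRing.Theory Num.Theory.
Import numFieldNormedType.Exports.
Local Open Scope ring_scope.

Module Helpers.
Set Implicit Arguments. Unset Strict Implicit. Unset Printing Implicit Defensive.


Section S.
Variable R : realType.
Local Open Scope classical_set_scope.

Lemma cellP (N r : nat) (t : R) :
  (r%:R / 2 ^+ N <= t < r.+1%:R / 2 ^+ N) = (r%:R <= t * 2 ^+ N < r.+1%:R).
Proof.
have h : 0 < (2:R) ^+ N by rewrite exprn_gt0.
by rewrite !ler_pdivrMr // !ltr_pdivlMr.
Qed.

Lemma cell_trunc (N : nat) (t : R) : 0 <= t ->
  let r := Num.truncn (t * 2 ^+ N) in r%:R / 2 ^+ N <= t < r.+1%:R / 2 ^+ N.
Proof.
move=> t0 /=; rewrite cellP; apply: truncn_itv.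
by rewrite mulr_ge0 // exprn_ge0.
Qed.

Lemma cell_uniq (N r : nat) (t : R) :
  r%:R / 2 ^+ N <= t < r.+1%:R / 2 ^+ N -> Num.truncn (t * 2 ^+ N) = r.
Proof. by rewrite cellP => /truncn_def. Qed.

Lemma step_int (N : nat) (c : nat -> R) (g : R -> R) :
  (forall r, 0 <= c r) ->
  (forall r t, (r < 2 ^ N)%N -> r%:R / 2 ^+ N <= t < r.+1%:R / 2 ^+ N -> g t = c r) ->
  (\int[@lebesgue_measure R]_(t in `[0%R, 1%R[) (g t)%:E =
     (\sum_(r < 2 ^ N) c r / 2 ^+ N)%:E)%E.
Proof.
move=> c0 hg.
have h2 : 0 < (2:R) ^+ N by rewrite exprn_gt0.
pose cell (r : nat) : set R := `[r%:R / 2 ^+ N, r.+1%:R / 2 ^+ N[%classic.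
have -> : (\int[@lebesgue_measure R]_(t in `[0%R, 1%R[) (g t)%:E =
   \int[@lebesgue_measure R]_(t in `[0%R, 1%R[) (\sum_(r < 2 ^ N) ((c r)%:E * (\1_(cell r) t)%:E)))%E.
  apply: eq_integral => t; rewrite inE /= in_itv /= => /andP [t0 t1].
  set r0 := Num.truncn (t * 2 ^+ N).
  have hr0 : (r0 < 2 ^ N)%N.
    rewrite /r0 truncn_lt_nat; last by rewrite mulr_ge0 // ltW.
    by rewrite natrX -[X in _ < X]mul1r ltr_pM2r.
  rewrite (bigD1 (Ordinal hr0)) //= big1 ?adde0.
    rewrite indicE mem_set ?mule1; first by rewrite (hg r0 t) //; exact: cell_trunc.
    exact: cell_trunc.
  move=> i /eqP hi; rewrite indicE memNset ?mule0 //.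
  move=> /cell_uniq hc; apply: hi; apply: val_inj => /=.
  by rewrite -hc.
rewrite ge0_integral_sum //; last 2 first.
- move=> r; apply: measurable_funeM; apply/measurable_realfun.measurable_EFinP.
  exact: measurable_realfun.measurable_indic (measurable_itv _).
- by move=> r t _; rewrite mule_ge0 // lee_fin.
rewrite -sumEFin; apply: eq_bigr => r _.
rewrite ge0_integralZl //; last 2 first.
- apply/measurable_realfun.measurable_EFinP; exact: measurable_realfun.measurable_indic (measurable_itv _).
- by rewrite lee_fin.
rewrite integral_indic; last exact: measurable_itv.
have -> : cell r `&` `[0%R, 1%R[%classic = cell r.
  apply: setIidl => t; rewrite /cell /= !in_itv /= => /andP [h1 h3].
  apply/andP; split.
    by apply: le_trans h1; rewrite divr_ge0 // ltW.
  apply: (lt_le_trans h3); rewrite ler_pdivrMr // mul1r -natrX ler_nat.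
  exact: ltn_ord r.
transitivity ((c r)%:E * ((r.+1%:R / 2 ^+ N)%:E - (r%:R / 2 ^+ N)%:E))%E.
  congr (_ * _)%E; rewrite /cell.
  have := @lebesgue_measure_itv R (Interval (BLeft (r%:R / 2 ^+ N)) (BLeft (r.+1%:R / 2 ^+ N))).
  rewrite /= lte_fin ltr_pM2r ?invr_gt0 // ltr_nat ltnSn => hm; exact: hm.
rewrite -EFinB -EFinM; congr (_%:E).
by rewrite -mulrBl -natrB // subSnn mul1r.
exact: measurable_itv.
Qed.
End S.
Section S2.
Variable R : realType.
Implicit Types t : R.

Definition incell (N r : nat) t := r%:R / 2 ^+ N <= t < r.+1%:R / 2 ^+ N.

Lemma incell_le N r t A : incell N r t -> (A%:R / 2 ^+ N <= t) = (A <= r)%N.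
Proof.
rewrite /incell cellP => /andP [h1 h2].
have h : 0 < (2:R) ^+ N by rewrite exprn_gt0.
rewrite ler_pdivrMr //; apply/idP/idP => H.
  by rewrite -ltnS -(ltr_nat R); apply: le_lt_trans h2.
by apply: le_trans h1; rewrite ler_nat.
Qed.

Lemma incell_lt N r t A : incell N r t -> (t < A%:R / 2 ^+ N) = (r < A)%N.
Proof.
move=> h; rewrite ltNge (incell_le _ h) -ltnNge; done.
Qed.

Lemma scale_pow (a k N : nat) : (k <= N)%N ->
  a%:R / (2:R) ^+ k = (a * 2 ^ (N - k))%:R / 2 ^+ N.
Proof.
move=> kN; rewrite -{2}(subnKC kN) exprD natrM natrX invfM mulrA.
have hne : (2:R) ^+ (N - k) != 0 by rewrite expf_neq0.
by field; rewrite hne expf_neq0.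
Qed.

Lemma incell_dyadic N r t k q : (k <= N)%N -> incell N r t ->
  `[< @dyadic R k q t >] = ((q.-1 * 2 ^ (N - k) <= r) && (r < q * 2 ^ (N - k)))%N.
Proof.
move=> kN h; rewrite /dyadic /= asboolb.
by rewrite (scale_pow q.-1 kN) (scale_pow q kN) (incell_le _ h) (incell_lt _ h).
Qed.

Lemma div_iff (r e a : nat) : (0 < e)%N ->
  ((a * e <= r) && (r < a.+1 * e))%N = (r %/ e == a)%N.
Proof.
move=> e0; rewrite eqn_leq -leq_divRL // -ltn_divLR // ltnS andbC //.
Qed.

Definition sq (k : nat) : R := Num.sqrt (2 ^+ k.-1).

Lemma incell01 N r t : (r < 2 ^ N)%N -> incell N r t -> (0 <= t) && (t < 1).
Proof.
move=> rN h; have := h; rewrite /incell => /andP [h1 h2].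
have h0 : 0 < (2:R) ^+ N by rewrite exprn_gt0.
apply/andP; split.
  by apply: le_trans h1; rewrite divr_ge0 // ltW.
by apply: (lt_le_trans h2); rewrite ler_pdivrMr // mul1r -natrX ler_nat.
Qed.

Lemma haar_cell N r t k j : (k <= N)%N -> (0 < j)%N -> (r < 2 ^ N)%N -> incell N r t ->
  haar k j t = if (r %/ 2 ^ (N - k) == (2 * j).-2)%N then sq k
               else if (r %/ 2 ^ (N - k) == (2 * j).-1)%N then - sq k else 0.
Proof.
move=> kN j0 rN h; rewrite /haar (incell01 rN h).
rewrite !(incell_dyadic _ kN h).
have e0 : (0 < 2 ^ (N - k))%N by rewrite expn_gt0.
have [a ->] : exists a, (2 * j = a.+2)%N.
  exists (2*j).-2; case: j j0 => // j _; rewrite mulnS //.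
by rewrite /= !div_iff.
Qed.
End S2.


Section S3.
Variable R : realType.

Lemma sum_collapse (Y : normedModType R) (B d : nat) (s : R) (v : nat -> Y) :
  (d < 2 * B)%N ->
  \sum_(j <- iota 1 B) ((if (d == (2 * j).-2)%N then s
      else if (d == (2 * j).-1)%N then - s else 0) *: v j)
  = (if odd d then - s else s) *: v (d./2).+1.
Proof.
move=> dB.
have hd := odd_double_half d.
have ho : (odd d <= 1)%N by case: (odd d).
move: hd ho; set h := d./2; set b := odd d => hd ho.
rewrite -muln2 in hd.
have hin : (h.+1 \in iota 1 B) by rewrite mem_iota; lia.
rewrite (big_rem _ hin) /= big1_seq ?addr0.
  congr (_ *: _); case: b hd ho => /= hd _.
    by rewrite ifF; [rewrite ifT //; apply/eqP; lia | apply/negbTE/eqP; lia].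
  by rewrite ifT //; apply/eqP; lia.
move=> j /andP [_]; rewrite mem_rem_uniq ?iota_uniq // => /andP [hj].
rewrite mem_iota => /andP [j1 _].
rewrite ifF; last by apply/negbTE/eqP => E; move/eqP: hj; apply; lia.
by rewrite ifF ?scale0r //; apply/negbTE/eqP => E; move/eqP: hj; apply; lia.
Qed.

Definition Phi (Y : normedModType R) (N a b : nat) (v : nat * nat -> Y) (r : nat) : Y :=
  \sum_(k <- iota a (b.+1 - a))
     ((if odd (r %/ 2 ^ (N - k))%N then - sq R k else sq R k) *:
        v (k, ((r %/ 2 ^ (N - k))%N./2).+1)).

Lemma fsum_cell (Y : normedModType R) N a b (v : nat * nat -> Y) r (t : R) :
  (0 < a)%N -> (b <= N)%N -> (r < 2 ^ N)%N -> incell N r t ->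
  \sum_(p <- Dset a b) haar p.1 p.2 t *: v p = Phi N a b v r.
Proof.
move=> a0 bN rN h; rewrite /Dset big_flatten /= big_map /Phi.
apply: eq_big_seq => k; rewrite mem_iota => /andP [ak kb].
rewrite big_map.
have kN : (k <= N)%N by lia.
have k0 : (0 < k)%N by lia.
under eq_big_seq => j hj.
  move: hj; rewrite mem_iota => /andP [j1 _].
  rewrite /= (haar_cell kN j1 rN h).
  over.
apply: (@sum_collapse Y _ _ _ (fun j => v (k, j))).
rewrite ltn_divLR ?expn_gt0 // -expnS prednK // -expnD subnKC //.
Qed.

Lemma L2_cell (Y : normedModType R) N a b (v : nat * nat -> Y) :
  (0 < a)%N -> (b <= N)%N ->
  L2norm (fun t : R => \sum_(p <- Dset a b) haar p.1 p.2 t *: v p) =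
  Num.sqrt (\sum_(r < 2 ^ N) `|Phi N a b v r| ^+ 2 / 2 ^+ N).
Proof.
move=> a0 bN; rewrite /L2norm.
rewrite (@step_int R N (fun r => `|Phi N a b v r| ^+ 2)) //.
move=> r t rN h; rewrite (fsum_cell _ a0 bN rN h) //.
Qed.

Lemma Phi_shift (Y : normedModType R) m n (v : nat * nat -> Y) i s :
  (s < 2 ^ n)%N ->
  Phi (m + n) m.+1 (m + n) v (i * 2 ^ n + s) =
  Num.sqrt (2 ^+ m) *: Phi n 1 n (fun p => v (m + p.1, i * 2 ^ p.1.-1 + p.2)%N) s.
Proof.
move=> sn; rewrite /Phi subSS addKn subn1 /= -addn1 iotaDl big_map scaler_sumr.
apply: eq_big_seq => k; rewrite mem_iota => /andP [k1 kn].
have kn' : (k <= n)%N by lia.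
rewrite subnDl /=.
have e0 : (0 < 2 ^ (n - k))%N by rewrite expn_gt0.
have -> : ((i * 2 ^ n + s) %/ 2 ^ (n - k) = i * 2 ^ k + s %/ 2 ^ (n - k))%N.
  by rewrite -{1}(subnKC kn') expnD mulnA divnMDl.
set q := (s %/ 2 ^ (n - k))%N.
have hk : k = k.-1.+1 by lia.
have -> : (i * 2 ^ k = (i * 2 ^ k.-1).*2)%N by rewrite {1}hk expnS -muln2; ring.
rewrite oddD odd_double /= halfD odd_double /= doubleK.
have -> : sq R (m + k) = Num.sqrt (2 ^+ m) * sq R k.
  by rewrite /sq -sqrtrM ?exprn_ge0 // -exprD; congr (Num.sqrt (_ ^+ _)); lia.
rewrite scalerA add0n addnS; case: (odd q); by rewrite ?mulrN.
Qed.

Lemma sum_split a b (f : nat -> R) :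
  \sum_(r < a * b) f r = \sum_(i < a) \sum_(s < b) f (i * b + s)%N.
Proof.
elim: a => [|a IH]; first by rewrite mul0n !big_ord0.
rewrite mulSnr big_split_ord IH big_ord_recr /=; congr (_ + _).
Qed.

Lemma sum_iota1 (h : nat -> R) M :
  \sum_(j <- iota 1 M) h j = \sum_(j < M) h j.+1.
Proof.
by rewrite -[1%N]/(1 + 0)%N iotaDl big_map -{1}(subn0 M) -/(index_iota 0 M) big_mkord.
Qed.

Lemma sum_reindex m n (w : nat * nat -> R) :
  \sum_(p <- Dset m.+1 (m + n)) w p =
  \sum_(i < 2 ^ m) \sum_(p <- Dset 1 n) w (m + p.1, i * 2 ^ p.1.-1 + p.2)%N.
Proof.
rewrite /Dset big_flatten /= big_map subSS addKn -addn1 iotaDl big_map.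
rewrite [RHS]exchange_big /= big_flatten /= big_map subn1 /=.
apply: eq_big_seq => k; rewrite mem_iota => /andP [k1 _].
rewrite !big_map [RHS]exchange_big /=.
have -> : (m + k).-1 = (m + k.-1)%N by lia.
rewrite expnD sum_iota1 (sum_split _ _ (fun j => w (m + k, j.+1)%N)); apply: eq_bigr => i _.
by rewrite (sum_iota1 (fun j => w (m + k, i * 2 ^ k.-1 + j)%N)); apply: eq_bigr => j _; rewrite addnS.
Qed.
End S3.


Section S4.
Variable R : realType.

Lemma key (X Y : normedModType R) (T : X -> Y) m n (c : R) (x : nat * nat -> X) :
  0 <= c ->
  (forall x' : nat * nat -> X,
     L2norm (fun t : R => \sum_(p <- Dset 1 n) haar p.1 p.2 t *: T (x' p))
       <= c * Num.sqrt (\sum_(p <- Dset 1 n) `|x' p| ^+ 2)) ->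
  L2norm (fun t : R => \sum_(p <- Dset m.+1 (m + n)) haar p.1 p.2 t *: T (x p))
    <= c * Num.sqrt (\sum_(p <- Dset m.+1 (m + n)) `|x p| ^+ 2).
Proof.
move=> c0 hc.
pose xi (i : nat) (p : nat * nat) := x (m + p.1, i * 2 ^ p.1.-1 + p.2)%N.
rewrite (L2_cell (N := m + n)) // expnD.
rewrite (sum_split _ _ (fun r => `|Phi (m + n) m.+1 (m + n) (fun p => T (x p)) r| ^+ 2 / 2 ^+ (m + n))).
have hi : forall i : nat,
  \sum_(s < 2 ^ n) `|Phi (m + n) m.+1 (m + n) (fun p => T (x p)) (i * 2 ^ n + s)| ^+ 2 / 2 ^+ (m + n)
  = L2norm (fun t : R => \sum_(p <- Dset 1 n) haar p.1 p.2 t *: T (xi i p)) ^+ 2.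
  move=> i; rewrite (L2_cell (N := n)) // sqr_sqrtr; last first.
    by apply: sumr_ge0 => s _; rewrite divr_ge0 // exprn_ge0.
  apply: eq_bigr => s _; rewrite Phi_shift // normrZ ger0_norm ?sqrtr_ge0 //.
  rewrite exprMn sqr_sqrtr ?exprn_ge0 // exprD.
  have h2 : (2:R) ^+ m != 0 by rewrite expf_neq0.
  have h3 : (2:R) ^+ n != 0 by rewrite expf_neq0.
  by field; rewrite h2 h3.
under eq_bigr => i _ do rewrite hi.
apply: le_trans (ler_wsqrtr (_ : _ <= \sum_(i < 2 ^ m) c ^+ 2 * \sum_(p <- Dset 1 n) `|xi i p| ^+ 2)) _.
  apply: ler_sum => i _; have h := hc (xi i).
  have L0 : 0 <= L2norm (fun t : R => \sum_(p <- Dset 1 n) haar p.1 p.2 t *: T (xi i p)).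
    by rewrite /L2norm sqrtr_ge0.
  rewrite expr2; apply: le_trans (ler_pM L0 L0 h h) _.
  by rewrite mulrACA -!expr2 sqr_sqrtr // sumr_ge0 // => p _; rewrite exprn_ge0.
rewrite -mulr_sumr sqrtrM ?exprn_ge0 // sqrtr_sqr ger0_norm //.
by rewrite (sum_reindex m n (fun p => `|x p| ^+ 2)).
Qed.

Lemma term_le_sum (I : eqType) (s : seq I) (f : I -> R) q :
  (forall p, 0 <= f p) -> q \in s -> f q <= \sum_(p <- s) f p.
Proof.
move=> f0 hq; rewrite (big_rem _ hq) /= lerDl.
by apply: sumr_ge0 => p _.
Qed.

Lemma right_bound (X Y : normedModType R) (T : X -> Y) (M : R) n :
  (forall y, `|T y| <= M * `|y|) ->
  exists c : R, 0 <= c /\ forall x : nat * nat -> X,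
     L2norm (fun t : R => \sum_(p <- Dset 1 n) haar p.1 p.2 t *: T (x p))
       <= c * Num.sqrt (\sum_(p <- Dset 1 n) `|x p| ^+ 2).
Proof.
move=> hT.
have hT' : forall y, `|T y| <= `|M| * `|y|.
  by move=> y; apply: (le_trans (hT y)); rewrite ler_wpM2r // real_ler_norm // num_real.
pose K := \sum_(k <- iota 1 n) sq R k * `|M|.
have K0 : 0 <= K by apply: sumr_ge0 => k _; rewrite mulr_ge0 // sqrtr_ge0.
exists K; split => // x.
set S := Num.sqrt (\sum_(p <- Dset 1 n) `|x p| ^+ 2).
have S0 : 0 <= S by rewrite sqrtr_ge0.
have hx : forall q, q \in Dset 1 n -> `|x q| <= S.
  move=> q hq; rewrite -[leLHS](@ger0_norm _ `|x q|) // -sqrtr_sqr ler_wsqrtr //.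
  by apply: (@term_le_sum _ _ (fun p => `|x p| ^+ 2)) => // p; rewrite exprn_ge0.
have hP : forall s, (s < 2 ^ n)%N -> `|Phi n 1 n (fun p => T (x p)) s| <= K * S.
  move=> s sn; rewrite /Phi subn1 /= /K mulr_suml.
  apply: le_trans (ler_norm_sum _ _ _) _.
  rewrite [leLHS]big_seq [leRHS]big_seq; apply: ler_sum => k; rewrite mem_iota => /andP [k1 kn].
  rewrite normrZ.
  have -> : `|(if odd (s %/ 2 ^ (n - k))%N then - sq R k else sq R k)| = sq R k.
    by case: ifP; rewrite ?normrN ger0_norm // sqrtr_ge0.
  rewrite -mulrA ler_wpM2l ?sqrtr_ge0 //.
  apply: (le_trans (hT' _)); rewrite ler_wpM2l //; apply: hx.
  apply/allpairsPdep; exists k, ((s %/ 2 ^ (n - k))%N./2).+1; split => //.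
    by rewrite mem_iota; apply/andP; split; lia.
  rewrite mem_iota; apply/andP; split => //.
  have kn' : (k <= n)%N by lia.
  have hd : (s %/ 2 ^ (n - k) < 2 * 2 ^ k.-1)%N.
    rewrite ltn_divLR ?expn_gt0 // -expnS prednK // -expnD subnKC //.
  move: hd; rewrite -divn2; set d := (s %/ 2 ^ (n - k))%N; lia.
rewrite (L2_cell (N := n)) //.
apply: le_trans (ler_wsqrtr (_ : _ <= \sum_(s < 2 ^ n) (K * S) ^+ 2 / 2 ^+ n)) _.
  apply: ler_sum => s _; rewrite ler_wpM2r ?invr_ge0 ?exprn_ge0 //.
  rewrite ler_sqr ?nnegrE ?mulr_ge0 //; exact: hP.
have -> : \sum_(s < 2 ^ n) (K * S) ^+ 2 / 2 ^+ n = (K * S) ^+ 2.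
  have e : (((2 ^ n)%N)%:R : R) = 2 ^+ n by rewrite natrX.
  rewrite sumr_const card_ord -[_ *+ _]mulr_natr e.
  by rewrite -mulrA mulVf ?mulr1 // expf_neq0.
by rewrite sqrtr_sqr ger0_norm ?mulr_ge0.
Qed.
End S4.

End Helpers.
Import Helpers.

Theorem corollary3p2 (m n : nat) (R : realType)
  (X Y : completeNormedModType R) (T : {linear X -> Y})
  (hT : exists M : R, forall x : X, `|T x| <= M * `|x|) :
  tau T (Dset m.+1 (m + n)) <= tau T (Dset 1 n).
Proof.
case: hT => M hM.
have [c0 [c0pos hc0]] := right_bound n hM.
rewrite /tau; apply: lb_le_inf.
  by exists c0; split.
move=> c [cpos hc]; apply: ge_inf.
  by exists 0 => a [].
split => // x; exact: key.
Qed.
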